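(* Let $a=0.19$, $b=0.5095$, $f^-(x)=x$, and $f^+(x)=0$ for $x<a$, $f^+(x)=\frac{(x-a)^2}{(b-a)^2}$ for $a\le x\le b$, $f^+(x)=1$ for $x>b$. Then for all $x,y,z\in[0,1]$, with $q=f^+(x)$, $ALG=y(1-z)+z(1-y)+(1-q)(1-z)+(1-q)(1-y)$ and $LP=x(1-yz)+(1-y)(1-qz)+(1-z)(1-qy)$, we have $2\,LP\ge ALG$; i.e., $2LP(uvw)\ge ALG(uvw)$ for all $(+,-,-)$-triangles.
   Context: For a triangle with one positive edge of length $x$ and two negative edges of lengths $y,z$, with cut probabilities $f^+(x)$, $f^-(y)$, $f^-(z)$, the per-triangle quantities of the pivot rounding algorithm are $ALG=f^-(y)(1-f^-(z))+f^-(z)(1-f^-(y))+(1-f^+(x))(1-f^-(z))+(1-f^+(x))(1-f^-(y))$ and $LP=x(1-f^-(y)f^-(z))+(1-y)(1-f^+(x)f^-(z))+(1-z)(1-f^+(x)f^-(y))$. *)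

(* Defs.v *)
From Stdlib Require Import Reals.
Open Scope R_scope.

Definition a_thr : R := 19 / 100.
Definition b_thr : R := 5095 / 10000.

(* cut probability for negative edges *)
Definition fminus (x : R) : R := x.

(* cut probability for positive edges *)
Definition fplus (x : R) : R :=
  if Rlt_dec x a_thr then 0
  else if Rle_dec x b_thr then (x - a_thr) ^ 2 / (b_thr - a_thr) ^ 2
  else 1.

(* Per-triangle quantities for a (+,-,-) triangle with positive edge x
   and negative edges y, z, for general cut-probability functions. *)
Definition ALG (fp fm : R -> R) (x y z : R) : R :=
  fm y * (1 - fm z) + fm z * (1 - fm y)
  + (1 - fp x) * (1 - fm z) + (1 - fp x) * (1 - fm y).

Definition LP (fp fm : R -> R) (x y z : R) : R :=
  x * (1 - fm y * fm z) + (1 - y) * (1 - fp x * fm z)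
  + (1 - z) * (1 - fp x * fm y).

(* Main.v *)
Require Import Defs.
From Stdlib Require Import Reals Lra Psatz.
Open Scope R_scope.

Lemma key x y z q : 0 <= x <= 1 -> 0 <= y <= 1 -> 0 <= z <= 1 -> 0 <= q <= 1 ->
  q <= 2 * x ->
  2 * (x * (1 - y * z) + (1 - y) * (1 - q * z) + (1 - z) * (1 - q * y)) >=
  y * (1 - z) + z * (1 - y) + (1 - q) * (1 - z) + (1 - q) * (1 - y).
Proof.
  intros Hx Hy Hz Hq Hqx.
  assert (E : 2 * (x * (1 - y * z) + (1 - y) * (1 - q * z) + (1 - z) * (1 - q * y)) -
    (y * (1 - z) + z * (1 - y) + (1 - q) * (1 - z) + (1 - q) * (1 - y)) =
    ((1-y)+(1-z))*(2*x-q) + ((1-y)*(1-z))*(2+4*q-2*x)) by ring.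
  assert (0 <= ((1-y)+(1-z))*(2*x-q)) by (apply Rmult_le_pos; lra).
  assert (0 <= ((1-y)*(1-z))*(2+4*q-2*x)).
  { apply Rmult_le_pos; [apply Rmult_le_pos|]; lra. }
  lra.
Qed.

Theorem corollary2 :
  forall x y z : R,
    0 <= x <= 1 -> 0 <= y <= 1 -> 0 <= z <= 1 ->
    2 * LP fplus fminus x y z >= ALG fplus fminus x y z.
Proof.
  intros x y z Hx Hy Hz.
  unfold LP, ALG, fminus.
  apply key; auto; unfold fplus, a_thr, b_thr.
  - destruct (Rlt_dec x (19/100)); [lra|].
    destruct (Rle_dec x (5095/10000)); [|lra].
    split.
    + apply Rmult_le_pos; [nra|].
      left; apply Rinv_0_lt_compat; nra.
    + apply Rmult_le_reg_r with ((5095 / 10000 - 19 / 100) ^ 2); [nra|].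
      unfold Rdiv; rewrite Rmult_assoc, Rinv_l by nra. nra.
  - destruct (Rlt_dec x (19/100)); [lra|].
    destruct (Rle_dec x (5095/10000)); [|lra].
    apply Rmult_le_reg_r with ((5095 / 10000 - 19 / 100) ^ 2); [nra|].
    unfold Rdiv; rewrite Rmult_assoc, Rinv_l by nra. nra.
Qed.
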